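(* Let $G$ be a finite group, $H\le G$ a subgroup, and $k$ a field such that $kH$ is a separable $k$-algebra. Suppose there are elements $g'_1,\ldots,g'_r\in G$ such that $\mathrm{core}_H(G)=H^{g'_1}\cap\cdots\cap H^{g'_r}\cap H$. Then the h-depth satisfies $d_h(kH,kG)\le 2r+3$.
   Context: $H^g=g^{-1}Hg$ and $\mathrm{core}_H(G)=\bigcap_{g\in G}H^g$. Modules $X,Y$ are similar if each is isomorphic to a direct summand of a finite direct sum of copies of the other. For a ring extension $B\subseteq A$, let $A^{\otimes_B n}$ be the $n$-fold tensor power of $A$ over $B$, viewed as an $A$-$A$-bimodule. The extension has h-depth $2n-1$ ($n\ge1$) if $A^{\otimes_B n}\sim A^{\otimes_B(n+1)}$ as $A$-$A$-bimodules; $d_h(B,A)$ is the least such odd number ($\infty$ if none). *)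

(* Defs.v *)
From HB Require Import structures.
From mathcomp Require Import all_boot all_order all_algebra all_fingroup.
Set Implicit Arguments. Unset Strict Implicit. Unset Printing Implicit Defensive.
Import GRing.Theory.
Local Open Scope ring_scope.

(* The group G is the whole finGroupType gT; the group algebra kG has the
   k-basis gT.  The k-tensor power (kG)^{(x)_k n} has the k-basis of n-tuples
   of group elements, represented as {ffun 'I_n -> gT}.  Vectors of a free
   k-space with finite basis T are functions T -> k. *)

Definition tbasis (gT : finGroupType) (n : nat) := {ffun 'I_n -> gT}.

Definition ldact (gT : finGroupType) (n : nat) (g : gT) (t : tbasis gT n)
  : tbasis gT n :=
  [ffun j : 'I_n => if nat_of_ord j == 0%N then (g * t j)%g else t j].

Definition rdact (gT : finGroupType) (n : nat) (g : gT) (t : tbasis gT n)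
  : tbasis gT n :=
  [ffun j : 'I_n => if nat_of_ord j == n.-1 then (t j * g)%g else t j].

Definition unitv (k : fieldType) (T : finType) (s : T) : T -> k :=
  fun t => (t == s)%:R.

(* Generators of the kernel of (kG)^{(x)_k n} ->> (kG)^{(x)_{kH} n}:
   for i.+1 < n, h in H:   ... (x) g_i h (x) g_{i+1} (x) ...
                         - ... (x) g_i (x) h g_{i+1} (x) ...
   (kH is spanned by H, kG by G, so these span the balancing relations);
   indices not satisfying the side condition give the zero vector. *)
Definition tens_rel (k : fieldType) (gT : finGroupType) (H : {set gT}) (n : nat)
  (r : 'I_n * gT * tbasis gT n) : tbasis gT n -> k :=
  let: (i, h, t) := r in
  if ((nat_of_ord i).+1 < n)%N && (h \in H) then
    fun u =>
      unitv k [ffun j : 'I_n => if nat_of_ord j == nat_of_ord i then (t j * h)%g else t j] u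
    - unitv k [ffun j : 'I_n => if nat_of_ord j == (nat_of_ord i).+1 then (h * t j)%g else t j] u
  else fun _ => 0.

Definition in_span (k : fieldType) (T R : finType) (w : R -> T -> k) (v : T -> k) : Prop :=
  exists c : R -> k, forall t, v t = \sum_(r : R) c r * w r t.

(* v lies in the relation subspace W_n, i.e. v = 0 in (kG)^{(x)_{kH} n} *)
Definition tens_zero (k : fieldType) (gT : finGroupType) (H : {set gT}) (n : nat)
  (v : tbasis gT n -> k) : Prop :=
  in_span (@tens_rel k gT H n) v.

Definition vmap (k : fieldType) (T1 T2 : finType) (F : T1 -> T2 -> k) (v : T1 -> k)
  : T2 -> k :=
  fun t => \sum_(s : T1) v s * F s t.

Definition bmap (k : fieldType) (T : finType) (sigma : T -> T) (v : T -> k) : T -> k :=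
  fun t' => \sum_(t : T | sigma t == t') v t.

(* F induces a well-defined kG-kG-bimodule map
   (kG)^{(x)_{kH} n1} -> (kG)^{(x)_{kH} n2}  (every such map lifts to some F) *)
Definition tens_hom (k : fieldType) (gT : finGroupType) (H : {set gT}) (n1 n2 : nat)
  (F : tbasis gT n1 -> tbasis gT n2 -> k) : Prop :=
  [/\ forall r, tens_zero H (vmap F (@tens_rel k gT H n1 r)),
      forall (g : gT) (s : tbasis gT n1),
        tens_zero H (fun t => F (ldact g s) t - bmap (ldact g) (F s) t)
    & forall (g : gT) (s : tbasis gT n1),
        tens_zero H (fun t => F (rdact g s) t - bmap (rdact g) (F s) t)].

(* (kG)^{(x)_{kH} n1} is isomorphic, as a kG-kG-bimodule, to a direct summand of
   a finite direct sum of m copies of (kG)^{(x)_{kH} n2}: there are bimodule maps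
   phi_j : X -> Y, psi_j : Y -> X (j < m) with sum_j psi_j o phi_j = id_X. *)
Definition tens_summand (k : fieldType) (gT : finGroupType) (H : {set gT}) (n1 n2 : nat)
  : Prop :=
  exists m : nat,
  exists Phi : 'I_m -> tbasis gT n1 -> tbasis gT n2 -> k,
  exists Psi : 'I_m -> tbasis gT n2 -> tbasis gT n1 -> k,
  [/\ forall j, tens_hom H (Phi j),
      forall j, tens_hom H (Psi j)
    & forall s : tbasis gT n1,
        tens_zero H (fun t => \sum_(j < m) vmap (Psi j) (Phi j s) t - unitv k s t)].

Definition tens_similar (k : fieldType) (gT : finGroupType) (H : {set gT}) (n1 n2 : nat)
  : Prop :=
  tens_summand k H n1 n2 /\ tens_summand k H n2 n1.

(* d_h(kH, kG) <= d : some n >= 1 with 2n-1 <= d has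
   (kG)^{(x)_{kH} n} ~ (kG)^{(x)_{kH} (n+1)} *)
Definition hdepth_le (k : fieldType) (gT : finGroupType) (H : {set gT}) (d : nat) : Prop :=
  exists n : nat, [/\ (0 < n)%N, (n.*2.-1 <= d)%N & tens_similar k H n n.+1].

(* kH is a separable k-algebra: there is a separability element
   e = sum_{x,y in H} e(x,y) x (x) y in kH (x)_k kH with
   mu(e) = sum e(x,y) xy = 1 and h e = e h for all h in H. *)
Definition grpalg_separable (k : fieldType) (gT : finGroupType) (H : {group gT}) : Prop :=
  exists e : gT -> gT -> k,
  [/\ forall x y, ~~ ((x \in H) && (y \in H)) -> e x y = 0,
      forall z : gT, \sum_(x in H) \sum_(y in H | (x * y)%g == z) e x y
                       = (z == 1%g)%:R
    & forall h x y, h \in H -> x \in H -> y \in H ->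
        e (h^-1 * x)%g y = e x (y * h^-1)%g].

(* Main.v *)
Require Import Defs.
From mathcomp Require Import all_boot all_order all_algebra all_fingroup.
Set Implicit Arguments. Unset Strict Implicit. Unset Printing Implicit Defensive.
Import GRing.Theory.

Local Open Scope group_scope.

Definition at_ (gT : finGroupType) (m : nat) (f : {ffun 'I_m -> gT}) (j : nat) : gT :=
  if (insub j : option 'I_m) is Some o then f o else 1.

Lemma atE (gT : finGroupType) m (f : {ffun 'I_m -> gT}) (i : 'I_m) : at_ f i = f i.
Proof.
rewrite /at_; case: insubP => [o _ ho|]; last by rewrite ltn_ord.
by congr (f _); apply: val_inj.
Qed.

Lemma at_ge (gT : finGroupType) m (f : {ffun 'I_m -> gT}) j : (m <= j)%N -> at_ f j = 1.
Proof. by move=> hj; rewrite /at_; case: insubP => [o ho|//]; rewrite ltnNge hj in ho. Qed.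

Definition Lf (gT : finGroupType) m (h : {ffun 'I_m -> gT}) (j : nat) : gT :=
  if j == 0%N then 1 else at_ h j.-1.
Definition Rf (gT : finGroupType) m (h : {ffun 'I_m -> gT}) (j : nat) : gT :=
  if (j.+1 < m)%N then at_ h j else 1.

Definition hact (gT : finGroupType) m (h s : {ffun 'I_m -> gT}) : {ffun 'I_m -> gT} :=
  [ffun j : 'I_m => (Lf h j)^-1 * s j * Rf h j].

Definition hmul (gT : finGroupType) m (a b : {ffun 'I_m -> gT}) : {ffun 'I_m -> gT} :=
  [ffun j => a j * b j].
Definition hinv (gT : finGroupType) m (a : {ffun 'I_m -> gT}) : {ffun 'I_m -> gT} :=
  [ffun j => (a j)^-1].
Definition hone (gT : finGroupType) m : {ffun 'I_m -> gT} := [ffun _ => 1].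

Lemma at_hmul (gT : finGroupType) m (a b : {ffun 'I_m -> gT}) j :
  at_ (hmul a b) j = at_ a j * at_ b j.
Proof. by rewrite /at_; case: insubP => [o _ _|_]; rewrite ?ffunE ?mulg1. Qed.

Lemma at_hinv (gT : finGroupType) m (a : {ffun 'I_m -> gT}) j :
  at_ (hinv a) j = (at_ a j)^-1.
Proof. by rewrite /at_; case: insubP => [o _ _|_]; rewrite ?ffunE ?invg1. Qed.

Lemma at_hone (gT : finGroupType) m j : at_ (hone gT m) j = 1.
Proof. by rewrite /at_; case: insubP => [o _ _|_]; rewrite ?ffunE. Qed.

Lemma Lf_hmul (gT : finGroupType) m (a b : {ffun 'I_m -> gT}) j :
  Lf (hmul a b) j = Lf a j * Lf b j.
Proof. by rewrite /Lf; case: ifP; rewrite ?mulg1 // at_hmul. Qed.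
Lemma Rf_hmul (gT : finGroupType) m (a b : {ffun 'I_m -> gT}) j :
  Rf (hmul a b) j = Rf a j * Rf b j.
Proof. by rewrite /Rf; case: ifP; rewrite ?mulg1 // at_hmul. Qed.
Lemma Lf_hinv (gT : finGroupType) m (a : {ffun 'I_m -> gT}) j :
  Lf (hinv a) j = (Lf a j)^-1.
Proof. by rewrite /Lf; case: ifP; rewrite ?invg1 // at_hinv. Qed.
Lemma Rf_hinv (gT : finGroupType) m (a : {ffun 'I_m -> gT}) j :
  Rf (hinv a) j = (Rf a j)^-1.
Proof. by rewrite /Rf; case: ifP; rewrite ?invg1 // at_hinv. Qed.
Lemma Lf_hone (gT : finGroupType) m j : Lf (hone gT m) j = 1.
Proof. by rewrite /Lf at_hone; case: ifP. Qed.
Lemma Rf_hone (gT : finGroupType) m j : Rf (hone gT m) j = 1.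
Proof. by rewrite /Rf at_hone; case: ifP. Qed.

Lemma hact_comp (gT : finGroupType) m (a b s : {ffun 'I_m -> gT}) :
  hact a (hact b s) = hact (hmul b a) s.
Proof.
apply/ffunP=> j; rewrite !ffunE Lf_hmul Rf_hmul.
by rewrite invMg !mulgA.
Qed.

Lemma hact_one (gT : finGroupType) m (s : {ffun 'I_m -> gT}) : hact (hone gT m) s = s.
Proof. by apply/ffunP=> j; rewrite !ffunE Lf_hone Rf_hone invg1 mulg1 mul1g. Qed.

Lemma hmul_inv (gT : finGroupType) m (a : {ffun 'I_m -> gT}) : hmul a (hinv a) = hone gT m.
Proof. by apply/ffunP=> j; rewrite !ffunE mulgV. Qed.

Lemma hact_inv (gT : finGroupType) m (a s : {ffun 'I_m -> gT}) : hact (hinv a) (hact a s) = s.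
Proof. by rewrite hact_comp hmul_inv hact_one. Qed.

Lemma hset_mul (gT : finGroupType) (H : {group gT}) m (a b : {ffun 'I_m -> gT}) :
  a \in ffun_on H -> b \in ffun_on H -> hmul a b \in ffun_on H.
Proof. by move=> /ffun_onP ha /ffun_onP hb; apply/ffun_onP=> j; rewrite ffunE groupM. Qed.
Lemma hset_inv (gT : finGroupType) (H : {group gT}) m (a : {ffun 'I_m -> gT}) :
  a \in ffun_on H -> hinv a \in ffun_on H.
Proof. by move=> /ffun_onP ha; apply/ffun_onP=> j; rewrite ffunE groupV. Qed.
Lemma hset_one (gT : finGroupType) (H : {group gT}) m : hone gT m \in ffun_on H.
Proof. by apply/ffun_onP=> j; rewrite ffunE group1. Qed.

Definition relb (gT : finGroupType) (H : {group gT}) m (s s' : {ffun 'I_m -> gT}) : bool :=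
  [exists h, (h \in ffun_on H) && (s' == hact h s)].

Lemma relP (gT : finGroupType) (H : {group gT}) m (s s' : {ffun 'I_m -> gT}) :
  reflect (exists2 h, h \in ffun_on H & s' = hact h s) (relb H s s').
Proof.
apply: (iffP existsP) => [[h /andP[hH /eqP ->]]|[h hH ->]]; exists h => //.
by rewrite hH eqxx.
Qed.

Lemma rel_refl (gT : finGroupType) (H : {group gT}) m (s : {ffun 'I_m -> gT}) : relb H s s.
Proof. by apply/relP; exists (hone gT m); rewrite ?hset_one ?hact_one. Qed.

Lemma rel_sym (gT : finGroupType) (H : {group gT}) m (s s' : {ffun 'I_m -> gT}) :
  relb H s s' -> relb H s' s.
Proof.
move/relP=> [h hH ->]; apply/relP; exists (hinv h); first exact: hset_inv.
by rewrite hact_inv.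
Qed.

Lemma rel_trans (gT : finGroupType) (H : {group gT}) m (s1 s2 s3 : {ffun 'I_m -> gT}) :
  relb H s1 s2 -> relb H s2 s3 -> relb H s1 s3.
Proof.
move/relP=> [h hH ->] /relP [h' hH' ->]; apply/relP; exists (hmul h h').
  exact: hset_mul.
by rewrite hact_comp.
Qed.

Lemma hact_ldact (gT : finGroupType) m (h s : {ffun 'I_m -> gT}) g :
  hact h (ldact g s) = ldact g (hact h s).
Proof.
apply/ffunP=> j; rewrite !ffunE; case: eqP => j0; last by [].
by rewrite /Lf j0 /= invg1 !mul1g mulgA.
Qed.

Lemma hact_rdact (gT : finGroupType) m (h s : {ffun 'I_m -> gT}) g :
  hact h (rdact g s) = rdact g (hact h s).
Proof.
apply/ffunP=> j; rewrite !ffunE; case: eqP => jl; last by [].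
have : ((nat_of_ord j).+1 < m)%N = false.
  by apply/negbTE; rewrite -leqNgt jl; case: (m) j {jl} => [[]|].
by rewrite /Rf => ->; rewrite !mulg1 mulgA.
Qed.

Local Open Scope ring_scope.

Lemma span0 (k : fieldType) (T R : finType) (w : R -> T -> k) (v : T -> k) :
  (forall t, v t = 0) -> in_span w v.
Proof. by move=> h; exists (fun _ => 0) => t; rewrite h big1 // => r _; rewrite mul0r. Qed.

Lemma spanD (k : fieldType) (T R : finType) (w : R -> T -> k) (v1 v2 : T -> k) :
  in_span w v1 -> in_span w v2 -> in_span w (fun t => v1 t + v2 t).
Proof.
move=> [c1 h1] [c2 h2]; exists (fun r => c1 r + c2 r) => t.
by rewrite h1 h2 -big_split /=; apply: eq_bigr => r _; rewrite mulrDl.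
Qed.

Lemma spanZ (k : fieldType) (T R : finType) (w : R -> T -> k) (v : T -> k) (a : k) :
  in_span w v -> in_span w (fun t => a * v t).
Proof.
move=> [c h]; exists (fun r => a * c r) => t.
by rewrite h mulr_sumr; apply: eq_bigr => r _; rewrite mulrA.
Qed.

Lemma span_ext (k : fieldType) (T R : finType) (w : R -> T -> k) (v1 v2 : T -> k) :
  (forall t, v1 t = v2 t) -> in_span w v1 -> in_span w v2.
Proof. by move=> e [c h]; exists c => t; rewrite -e h. Qed.

Lemma spanN (k : fieldType) (T R : finType) (w : R -> T -> k) (v : T -> k) :
  in_span w v -> in_span w (fun t => - v t).
Proof.
move=> h; apply: span_ext (spanZ (-1) h) => t; by rewrite mulN1r.
Qed.

Lemma span_sum (k : fieldType) (T R I : finType) (w : R -> T -> k) (P : pred I)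
  (F : I -> T -> k) :
  (forall i, P i -> in_span w (F i)) -> in_span w (fun t => \sum_(i | P i) F i t).
Proof.
move=> hF; have : forall s : seq I, in_span w (fun t => \sum_(i <- s | P i) F i t).
  elim=> [|i s ih]; first by apply: span0 => t; rewrite big_nil.
  case Pi: (P i).
    apply: span_ext (spanD (hF i Pi) ih) => t; by rewrite big_cons Pi.
  by apply: span_ext ih => t; rewrite big_cons Pi.
by apply.
Qed.

Lemma span_gen (k : fieldType) (T R : finType) (w : R -> T -> k) (r : R) :
  in_span w (w r).
Proof.
exists (fun r' => (r' == r)%:R) => t.
rewrite (bigD1 r) //= eqxx mul1r big1 ?addr0 // => r' /negbTE ->; by rewrite mul0r.
Qed.

Lemma sum_unitv (k : fieldType) (T : finType) (s : T) (G : T -> k) :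
  \sum_t unitv k s t * G t = G s.
Proof.
rewrite (bigD1 s) //= /unitv eqxx mul1r big1 ?addr0 // => t /negbTE ->; by rewrite mul0r.
Qed.

Lemma vmap_unitv (k : fieldType) (T1 T2 : finType) (F : T1 -> T2 -> k) s t :
  vmap F (unitv k s) t = F s t.
Proof. exact: sum_unitv. Qed.

Lemma bmap_unitv (k : fieldType) (T : finType) (sigma : T -> T) s t :
  bmap sigma (unitv k s) t = unitv k (sigma s) t.
Proof.
rewrite /bmap /unitv; have [e|ne] := eqVneq t (sigma s).
  rewrite e (bigD1 s) //= eqxx big1 ?addr0 // => t' /andP[_ /negbTE ->]; done.
rewrite big1 // => t' /eqP et; case: eqP => // e; by rewrite -et e eqxx in ne.
Qed.

From mathcomp Require Import zify.

Definition delta (gT : finGroupType) m (i : nat) (x : gT) : {ffun 'I_m -> gT} :=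
  [ffun j : 'I_m => if nat_of_ord j == i then x else 1%g].

Lemma at_delta (gT : finGroupType) m i (x : gT) j :
  at_ (delta m i x) j = if (j == i) && (j < m)%N then x else 1%g.
Proof.
rewrite /at_; case: insubP => [o jm oj|]; first by rewrite ffunE oj jm andbT.
by move/negbTE => ->; rewrite andbF.
Qed.

Lemma at_in (gT : finGroupType) (H : {group gT}) m (h : {ffun 'I_m -> gT}) j :
  h \in ffun_on H -> at_ h j \in H.
Proof. by move/ffun_onP=> hH; rewrite /at_; case: insubP => [o _ _|_]; rewrite ?group1. Qed.

Lemma delta_in (gT : finGroupType) (H : {group gT}) m i x :
  x \in H -> delta m i x \in ffun_on H.
Proof. by move=> xH; apply/ffun_onP => j; rewrite ffunE; case: ifP. Qed.

Lemma hact_delta (gT : finGroupType) m i (y : gT) (w : {ffun 'I_m -> gT}) :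
  (i.+1 < m)%N ->
  hact (delta m i y) w =
  [ffun j : 'I_m => if nat_of_ord j == i.+1 then (y^-1 * w j)%g
                   else if nat_of_ord j == i then (w j * y)%g else w j].
Proof.
move=> im; apply/ffunP => j; rewrite !ffunE /Lf /Rf !at_delta.
have jm := ltn_ord j; move: (nat_of_ord j) jm => jj jm.
case: (eqVneq jj i.+1) => [->|n1] /=.
  have -> : (i.+1 == i) = false by lia.
  by rewrite eqxx (ltnW im) /= if_same mulg1.
case: (eqVneq jj i) => [->|n2] /=.
  rewrite im (ltnW im) /=.
  case: (i =P 0%N) => [_|i0]; first by rewrite invg1 mul1g.
  have -> : (i.-1 == i) && (i.-1 < m)%N = false by lia.
  by rewrite invg1 mul1g.
case: ifP => _; first by rewrite invg1 mul1g; case: ifP => _; rewrite mulg1.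
have -> : (jj.-1 == i) = false by lia.
by rewrite /= invg1 mul1g; case: ifP => _; rewrite mulg1.
Qed.

Lemma hact_delta_big (gT : finGroupType) m i (y : gT) (w : {ffun 'I_m -> gT}) :
  (m <= i.+1)%N -> hact (delta m i y) w = w.
Proof.
move=> im; apply/ffunP => j; rewrite !ffunE /Lf /Rf !at_delta.
have jm := ltn_ord j; move: (nat_of_ord j) jm => jj jm.
have -> : (if (jj.+1 < m)%N then (if (jj == i) && (jj < m)%N then y else 1%g) else 1%g) = 1%g.
  by case: ifP => // jm1; have -> : (jj == i) && (jj < m)%N = false by lia.
rewrite mulg1; case: (jj =P 0%N) => [_|j0]; first by rewrite invg1 mul1g.
have -> : (jj.-1 == i) && (jj.-1 < m)%N = false by lia.
by rewrite invg1 mul1g.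
Qed.

Local Open Scope ring_scope.

Lemma tz_step (gT : finGroupType) (H : {group gT}) (k : fieldType) m i (y : gT)
  (w : tbasis gT m) :
  y \in H -> tens_zero H (fun t => unitv k (hact (delta m i y) w) t - unitv k w t).
Proof.
move=> yH; case: (ltnP i.+1 m) => im; last first.
  by apply: span0 => t; rewrite hact_delta_big // subrr.
have ilt : (i < m)%N by apply: ltnW.
pose t0 : {ffun 'I_m -> gT} := [ffun j : 'I_m => if nat_of_ord j == i then (w j * y)%g else w j].
apply: span_ext (spanN (span_gen (@tens_rel k gT H m) (Ordinal ilt, y^-1, t0)%g)).
move=> u; rewrite /tens_rel /= im groupV yH /=.
set t1 := [ffun j : 'I_m => _ ]; set t2 := [ffun j : 'I_m => _ ].
have -> : t1 = w.
  by apply/ffunP => j; rewrite /t1 /t0 !ffunE; case: ifP => ji; rewrite ji ?mulgK.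
have -> : t2 = hact (delta m i y) w.
  rewrite hact_delta //; apply/ffunP => j; rewrite /t2 /t0 !ffunE.
  case: ifP => [/eqP ->|_] //; have -> : (i.+1 == i) = false by lia.
  by [].
by rewrite opprB.
Qed.

Definition trunc (gT : finGroupType) m (h : {ffun 'I_m -> gT}) (kk : nat) : {ffun 'I_m -> gT} :=
  [ffun j : 'I_m => if (nat_of_ord j < kk)%N then h j else 1%g].

Lemma tz_hact (gT : finGroupType) (H : {group gT}) (k : fieldType) m (h w : tbasis gT m) :
  h \in ffun_on H -> tens_zero H (fun t => unitv k (hact h w) t - unitv k w t).
Proof.
move=> hH.
suff: forall kk, tens_zero H (fun t => unitv k (hact (trunc h kk) w) t - unitv k w t).
  move/(_ m); have -> // : trunc h m = h.
  by apply/ffunP => j; rewrite ffunE ltn_ord.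
elim=> [|kk ih].
  have -> : trunc h 0 = hone gT m by apply/ffunP => j; rewrite !ffunE.
  by apply: span0 => t; rewrite hact_one subrr.
have -> : trunc h kk.+1 = hmul (trunc h kk) (delta m kk (at_ h kk)).
  apply/ffunP => j; rewrite !ffunE ltnS leq_eqVlt.
  case: (eqVneq (nat_of_ord j) kk) => [e|ne] /=.
    by rewrite e ltnn mul1g -e atE.
  by rewrite mulg1.
rewrite -hact_comp.
apply: span_ext (spanD (@tz_step gT H k m kk (at_ h kk) (hact (trunc h kk) w) (at_in kk hH)) ih) => t.
by rewrite addrA subrK.
Qed.

Lemma hom_rel (gT : finGroupType) (H : {group gT}) (k : fieldType) m1 m2
  (F : tbasis gT m1 -> tbasis gT m2 -> k) :
  (forall s d, d \in ffun_on H -> tens_zero H (fun t => F (hact d s) t - F s t)) ->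
  forall r, tens_zero H (vmap F (@tens_rel k gT H m1 r)).
Proof.
move=> hF [[i x] t]; rewrite /tens_rel /=.
case: ifP => [/andP[im xH]|_]; last first.
  by apply: span0 => u; rewrite /vmap big1 // => s _; rewrite mul0r.
set t1 := [ffun j : 'I_m1 => _ ]; set t2 := [ffun j : 'I_m1 => _ ].
have -> : t2 = hact (delta m1 i x^-1) t1.
  rewrite hact_delta //; apply/ffunP => j; rewrite /t1 /t2 !ffunE.
  case: ifP => [/eqP e|_]; last by case: ifP => ji; rewrite ?ji ?mulgK.
  have -> : (nat_of_ord j == i) = false by lia.
  by rewrite invgK.
apply: span_ext (spanN (hF t1 _ (@delta_in gT H m1 i (x^-1)%g (groupVr xH)))) => u.
rewrite /vmap (eq_bigr (fun s => unitv k t1 s * F s u - unitv k (hact (delta m1 i (x^-1)%g) t1) s * F s u)); last by move=> s _; rewrite mulrBl.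
by rewrite sumrB !sum_unitv opprB.
Qed.

Local Open Scope group_scope.

Lemma ffun_at_eq (gT : finGroupType) m (f g : {ffun 'I_m -> gT}) :
  (forall j, (j < m)%N -> at_ f j = at_ g j) -> f = g.
Proof. by move=> e; apply/ffunP => j; rewrite -!atE e. Qed.

Lemma at_ffun (gT : finGroupType) m (F : nat -> gT) j :
  at_ [ffun i : 'I_m => F (nat_of_ord i)] j = if (j < m)%N then F j else 1.
Proof.
rewrite /at_; case: insubP => [o jm oj|/negbTE ->]; last by [].
by rewrite ffunE oj jm.
Qed.

Lemma at_hact (gT : finGroupType) m (h s : {ffun 'I_m -> gT}) j :
  (j < m)%N -> at_ (hact h s) j = (Lf h j)^-1 * at_ s j * Rf h j.
Proof. by move=> jm; rewrite -[j]/(nat_of_ord (Ordinal jm)) !atE ffunE. Qed.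

Lemma at_ldact (gT : finGroupType) m g (s : {ffun 'I_m -> gT}) j :
  (j < m)%N -> at_ (ldact g s) j = if j == 0%N then g * at_ s j else at_ s j.
Proof. by move=> jm; rewrite -[j]/(nat_of_ord (Ordinal jm)) !atE ffunE. Qed.

Lemma at_rdact (gT : finGroupType) m g (s : {ffun 'I_m -> gT}) j :
  (j < m)%N -> at_ (rdact g s) j = if j == m.-1 then at_ s j * g else at_ s j.
Proof. by move=> jm; rewrite -[j]/(nat_of_ord (Ordinal jm)) !atE ffunE. Qed.

Definition chain (gT : finGroupType) m (C : nat -> gT) (a b : gT) : {ffun 'I_m -> gT} :=
  [ffun j : 'I_m => (if nat_of_ord j == 0%N then a else 1) *
     ((C (nat_of_ord j).-1)^-1 * C (nat_of_ord j)) *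
     (if nat_of_ord j == m.-1 then b else 1)].

Lemma at_chain (gT : finGroupType) m (C : nat -> gT) a b j : (j < m)%N ->
  at_ (chain m C a b) j = (if j == 0%N then a else 1) * ((C j.-1)^-1 * C j) *
     (if j == m.-1 then b else 1).
Proof. by move=> jm; rewrite -[j]/(nat_of_ord (Ordinal jm)) !atE ffunE. Qed.

Lemma ldact_chain (gT : finGroupType) m (C : nat -> gT) a b g :
  ldact g (chain m C a b) = chain m C (g * a) b.
Proof. by apply/ffunP => j; rewrite !ffunE; case: (nat_of_ord j == 0%N); rewrite ?mul1g ?mulgA. Qed.

Lemma rdact_chain (gT : finGroupType) m (C : nat -> gT) a b g :
  rdact g (chain m C a b) = chain m C a (b * g).
Proof. by apply/ffunP => j; rewrite !ffunE; case: (nat_of_ord j == m.-1); rewrite ?mulg1 ?mulgA. Qed.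

Lemma conj_cancel (gT : finGroupType) (z c d : gT) :
  (z ^ c)^-1 * (c^-1 * d) * z ^ d = c^-1 * d.
Proof. by rewrite !conjgE !invMg invgK !mulgA mulgK mulgK mulgKV. Qed.

Definition nrm (gT : finGroupType) (H : {group gT}) (z : gT) := forall x, z ^ x \in H.

Lemma chain_conj (gT : finGroupType) (H : {group gT}) m (C : nat -> gT) a b z :
  C 0%N = 1 -> C m.-1 = 1 -> (1 < m)%N -> nrm H z ->
  exists2 h, h \in ffun_on H & chain m C (a * z) (z^-1 * b) = hact h (chain m C a b).
Proof.
move=> C0 Cl m1 nz; exists [ffun j : 'I_m => z ^ C (nat_of_ord j)].
  by apply/ffun_onP => j; rewrite ffunE.
apply: ffun_at_eq => j jm; rewrite at_hact // !at_chain // /Lf /Rf !(at_ffun m (fun j => z ^ C j)).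
case: (eqVneq j 0%N) => [->|j0].
  rewrite /= C0 m1 (_ : (0 == m.-1) = false); last by case: (m) m1 => [|[]].
  by rewrite invg1 !mulg1 mul1g conjg1 (ltnW m1).
have jm1 : (j.-1 < m)%N by lia.
rewrite jm1; case: (eqVneq j m.-1) => [->|jl].
  rewrite (_ : (m.-1.+1 < m)%N = false); last by lia.
  by rewrite Cl !mulg1 !mul1g conjgE !invMg invgK !mulgA mulgK.
rewrite (_ : (j.+1 < m)%N = true); last by lia.
by rewrite !mulg1 !mul1g jm conj_cancel.
Qed.

Lemma grp_step (gT : finGroupType) (X Y p q : gT) :
  X^-1 * Y = p^-1 * (X^-1 * Y) * q -> Y * q * Y^-1 = X * p * X^-1.
Proof.
move=> e.
have e2 : Y * q = X * p * (X^-1 * Y).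
  by rewrite e !mulgA mulgK mulgV mul1g.
by rewrite e2 !mulgA mulgK.
Qed.

Lemma chain_rel (gT : finGroupType) (H : {group gT}) m (C : nat -> gT) a b a' b'
   (h : {ffun 'I_m -> gT}) :
  C 0%N = 1 -> C m.-1 = 1 -> (1 < m)%N ->
  chain m C a' b' = hact h (chain m C a b) ->
  [/\ a' = a * at_ h 0, b' = (at_ h 0)^-1 * b &
      forall j, (j < m.-1)%N -> C j * at_ h j * (C j)^-1 = at_ h 0].
Proof.
move=> C0 Cl m1 e.
have E : forall j, (j < m)%N -> at_ (chain m C a' b') j = at_ (hact h (chain m C a b)) j.
  by move=> j _; rewrite e.
have mid : forall j, (j < m.-1)%N -> C j * at_ h j * (C j)^-1 = at_ h 0.
  elim=> [|j ih] jm; first by rewrite C0 mul1g invg1 mulg1.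
  rewrite -(ih (ltnW jm)); apply: grp_step.
  have jm' : (j.+1 < m)%N by lia.
  have := E j.+1 jm'.
  rewrite at_hact // !at_chain //.
  rewrite /Lf /Rf /= (_ : (j.+1 == m.-1) = false); last by lia.
  rewrite (_ : (j.+2 < m)%N = true); last by lia.
  by rewrite !mulg1 !mul1g.
have m0 : (0 < m)%N by apply: ltnW.
have := E 0%N m0; rewrite at_hact // !at_chain // /Lf /Rf /= (_ : (0 == m.-1) = false); last by lia.
rewrite m1 C0 invg1 !mulg1 mul1g => ea.
have ml : (m.-1 < m)%N by lia.
have := E m.-1 ml; rewrite at_hact // !at_chain // /Lf /Rf /= (_ : (m.-1 == 0%N) = false); last by lia.
rewrite eqxx (_ : (m.-1.+1 < m)%N = false); last by lia.
rewrite Cl !mulg1 !mul1g => eb.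
split => //.
rewrite -(mid m.-2); last by lia.
have -> : b' = C m.-2 * ((C m.-2)^-1 * b') by rewrite mulKVg.
by rewrite eb !invMg invgK !mulgA.
Qed.

Ltac simpl_ifs := repeat match goal with |- context [if ?b then _ else _] =>
  (have -> : b = true by lia) || (have -> : b = false by lia) end.

Definition ins (gT : finGroupType) n' (s : {ffun 'I_n'.+2 -> gT}) : {ffun 'I_n'.+3 -> gT} :=
  [ffun j : 'I_n'.+3 => if (nat_of_ord j < n'.+1)%N then at_ s j
                        else if nat_of_ord j == n'.+1 then 1 else at_ s n'.+1].
Definition contr (gT : finGroupType) n' (u : {ffun 'I_n'.+3 -> gT}) : {ffun 'I_n'.+2 -> gT} :=
  [ffun j : 'I_n'.+2 => if (nat_of_ord j < n'.+1)%N then at_ u j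
                        else at_ u n'.+1 * at_ u n'.+2].
Definition ext (gT : finGroupType) n' (h : {ffun 'I_n'.+2 -> gT}) : {ffun 'I_n'.+3 -> gT} :=
  [ffun j : 'I_n'.+3 => if nat_of_ord j == n'.+1 then at_ h n' else at_ h j].
Definition restr (gT : finGroupType) n' (h : {ffun 'I_n'.+3 -> gT}) : {ffun 'I_n'.+2 -> gT} :=
  [ffun j : 'I_n'.+2 => at_ h j].

Lemma at_ins (gT : finGroupType) n' (s : {ffun 'I_n'.+2 -> gT}) j : (j < n'.+3)%N ->
  at_ (ins s) j = if (j < n'.+1)%N then at_ s j else if j == n'.+1 then 1 else at_ s n'.+1.
Proof. by move=> jm; rewrite -[j]/(nat_of_ord (Ordinal jm)) !atE ffunE. Qed.
Lemma at_contr (gT : finGroupType) n' (u : {ffun 'I_n'.+3 -> gT}) j : (j < n'.+2)%N ->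
  at_ (contr u) j = if (j < n'.+1)%N then at_ u j else at_ u n'.+1 * at_ u n'.+2.
Proof. by move=> jm; rewrite -[j]/(nat_of_ord (Ordinal jm)) !atE ffunE. Qed.
Lemma at_ext (gT : finGroupType) n' (h : {ffun 'I_n'.+2 -> gT}) j :
  at_ (ext h) j = if j == n'.+1 then at_ h n' else at_ h j.
Proof.
case: (ltnP j n'.+3) => jm; first by rewrite -[j]/(nat_of_ord (Ordinal jm)) !atE ffunE.
rewrite (at_ge _ jm) (_ : (j == n'.+1) = false); last by lia.
by rewrite at_ge //; lia.
Qed.
Lemma at_restr (gT : finGroupType) n' (h : {ffun 'I_n'.+3 -> gT}) j : (j < n'.+2)%N ->
  at_ (restr h) j = at_ h j.
Proof. by move=> jm; rewrite -[j]/(nat_of_ord (Ordinal jm)) !atE ffunE. Qed.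

Lemma ext_in (gT : finGroupType) (H : {group gT}) n' (h : {ffun 'I_n'.+2 -> gT}) :
  h \in ffun_on H -> ext h \in ffun_on H.
Proof. by move=> hH; apply/ffun_onP => j; rewrite ffunE; case: ifP => _; apply: at_in. Qed.
Lemma restr_in (gT : finGroupType) (H : {group gT}) n' (h : {ffun 'I_n'.+3 -> gT}) :
  h \in ffun_on H -> restr h \in ffun_on H.
Proof. by move=> hH; apply/ffun_onP => j; rewrite ffunE; apply: at_in. Qed.

Lemma ins_hact (gT : finGroupType) n' (h s : {ffun 'I_n'.+2 -> gT}) :
  ins (hact h s) = hact (ext h) (ins s).
Proof.
apply: ffun_at_eq => j jm; rewrite at_hact // !at_ins // /Lf /Rf !at_ext.
case: (ltnP j n'.+1) => j1.
  rewrite at_hact; last by lia.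
  rewrite /Lf /Rf; simpl_ifs; done.
case: (eqVneq j n'.+1) => [->|jn].
  simpl_ifs; by rewrite mulg1 mulVg.
have -> : j = n'.+2 by lia.
rewrite at_hact // /Lf /Rf; simpl_ifs => /=.
by [].
Qed.

Lemma contr_hact (gT : finGroupType) n' (h u : {ffun 'I_n'.+3 -> gT}) :
  contr (hact h u) = hact (restr h) (contr u).
Proof.
apply: ffun_at_eq => j jm; rewrite at_hact // !at_contr // /Lf /Rf.
case: (ltnP j n'.+1) => j1.
  rewrite at_hact; last by lia.
  rewrite /Lf /Rf; simpl_ifs; rewrite ?at_restr //; lia.
have -> : j = n'.+1 by lia.
rewrite !at_hact // /Lf /Rf; simpl_ifs; rewrite ?at_restr //=.
by rewrite !mulg1 !mulgA mulgK.
Qed.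

Lemma contr_in (gT : finGroupType) (H : {group gT}) n' (h u : {ffun 'I_n'.+3 -> gT}) :
  h \in ffun_on H -> (at_ (hact h u) n'.+1 \in H) = (at_ u n'.+1 \in H).
Proof.
move=> hH; rewrite at_hact // /Lf /Rf; simpl_ifs.
rewrite groupMr; last exact: at_in.
by rewrite groupMl // groupV; apply: at_in.
Qed.

Lemma contr_ins (gT : finGroupType) n' (s : {ffun 'I_n'.+2 -> gT}) : contr (ins s) = s.
Proof.
apply: ffun_at_eq => j jm; rewrite !at_contr //; case: ifP => j1.
  by rewrite at_ins //; [rewrite j1 | lia].
rewrite !at_ins //; simpl_ifs; rewrite mul1g; congr at_; lia.
Qed.

Lemma ins_mid (gT : finGroupType) n' (s : {ffun 'I_n'.+2 -> gT}) : at_ (ins s) n'.+1 = 1.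
Proof. by rewrite at_ins //; simpl_ifs. Qed.

Lemma ins_ldact (gT : finGroupType) n' g (s : {ffun 'I_n'.+2 -> gT}) :
  ins (ldact g s) = ldact g (ins s).
Proof.
apply: ffun_at_eq => j jm; rewrite at_ldact // !at_ins //.
case: (ltnP j n'.+1) => j1; first by rewrite at_ldact //; lia.
by rewrite at_ldact //; simpl_ifs.
Qed.

Lemma ins_rdact (gT : finGroupType) n' g (s : {ffun 'I_n'.+2 -> gT}) :
  ins (rdact g s) = rdact g (ins s).
Proof.
apply: ffun_at_eq => j jm; rewrite at_rdact // !at_ins //.
case: (ltnP j n'.+1) => j1; first by rewrite at_rdact; [simpl_ifs|lia].
rewrite at_rdact //; simpl_ifs.
case: (eqVneq j n'.+1) => [->|jn]; first by simpl_ifs.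
have -> : j = n'.+2 by lia.
by simpl_ifs.
Qed.

Lemma contr_ldact (gT : finGroupType) n' g (u : {ffun 'I_n'.+3 -> gT}) :
  contr (ldact g u) = ldact g (contr u).
Proof.
apply: ffun_at_eq => j jm; rewrite at_ldact // !at_contr //.
case: (ltnP j n'.+1) => j1; first by rewrite at_ldact //; lia.
by rewrite !at_ldact //; simpl_ifs.
Qed.

Lemma contr_rdact (gT : finGroupType) n' g (u : {ffun 'I_n'.+3 -> gT}) :
  contr (rdact g u) = rdact g (contr u).
Proof.
apply: ffun_at_eq => j jm; rewrite at_rdact // !at_contr //.
case: (ltnP j n'.+1) => j1; first by rewrite at_rdact; [simpl_ifs|lia].
by rewrite !at_rdact //; simpl_ifs; rewrite mulgA.
Qed.

Lemma contr_ldact_in (gT : finGroupType) n' g (u : {ffun 'I_n'.+3 -> gT}) :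
  at_ (ldact g u) n'.+1 = at_ u n'.+1.
Proof. by rewrite at_ldact. Qed.
Lemma contr_rdact_in (gT : finGroupType) n' g (u : {ffun 'I_n'.+3 -> gT}) :
  at_ (rdact g u) n'.+1 = at_ u n'.+1.
Proof. by rewrite at_rdact //; simpl_ifs. Qed.

Local Open Scope ring_scope.

Lemma bmap_scale_unitv (k : fieldType) (T : finType) (sigma : T -> T) (c : k) s t :
  bmap sigma (fun t => c * unitv k s t) t = c * unitv k (sigma s) t.
Proof. by rewrite -bmap_unitv /bmap mulr_sumr. Qed.

Lemma summand_up (gT : finGroupType) (H : {group gT}) (k : fieldType) n' :
  tens_summand k H n'.+2 n'.+3.
Proof.
exists 1%N, (fun _ s => unitv k (ins s)).
exists (fun _ u t => (at_ u n'.+1 \in H)%:R * unitv k (contr u) t).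
split.
- move=> _; split.
  + apply: hom_rel => s d dH; rewrite ins_hact; exact: tz_hact (ext_in dH).
  + move=> g s; apply: span0 => t; by rewrite bmap_unitv ins_ldact subrr.
  + move=> g s; apply: span0 => t; by rewrite bmap_unitv ins_rdact subrr.
- move=> _; split.
  + apply: hom_rel => u d dH; rewrite contr_in // contr_hact.
    apply: span_ext (spanZ ((at_ u n'.+1 \in H)%:R) (tz_hact k (contr u) (restr_in dH))).
    by move=> t; rewrite mulrBr.
  + move=> g u; apply: span0 => t; rewrite bmap_scale_unitv contr_ldact.
    by rewrite contr_ldact_in subrr.
  + move=> g u; apply: span0 => t; rewrite bmap_scale_unitv contr_rdact.
    by rewrite contr_rdact_in subrr.
- move=> s; apply: span0 => t.
  by rewrite big_ord1 vmap_unitv ins_mid group1 mul1r contr_ins subrr.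
Qed.

Local Open Scope group_scope.

Definition gsn (gT : finGroupType) r (gs : 'I_r -> gT) (j : nat) : gT :=
  if (insub j : option 'I_r) is Some i then gs i else 1.

Definition Qf (gT : finGroupType) r (gs : 'I_r -> gT) (j : nat) : gT :=
  if j == 0%N then 1 else (gsn gs j.-1)^-1.

Lemma Qf0 (gT : finGroupType) r (gs : 'I_r -> gT) : Qf gs 0 = 1.
Proof. by []. Qed.

Lemma Qfl (gT : finGroupType) r (gs : 'I_r -> gT) : Qf gs r.+1 = 1.
Proof.
rewrite /Qf /= /gsn; case: insubP => [o ho _|_]; last by rewrite invg1.
by rewrite ltnn in ho.
Qed.

Lemma Qf_ord (gT : finGroupType) r (gs : 'I_r -> gT) (i : 'I_r) : Qf gs (nat_of_ord i).+1 = (gs i)^-1.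
Proof.
rewrite /Qf /= /gsn; case: insubP => [o _ ho|]; last by rewrite ltn_ord.
by congr (_^-1); congr gs; apply: val_inj.
Qed.

Definition phi (gT : finGroupType) r (gs : 'I_r -> gT) (a b : gT) : {ffun 'I_r.+2 -> gT} :=
  chain r.+2 (Qf gs) a b.

Fixpoint pref (gT : finGroupType) m (w : {ffun 'I_m -> gT}) (j : nat) {struct j} : gT :=
  match j with 0 => 1 | j'.+1 => pref w j' * at_ w j' end.

Definition Cw (gT : finGroupType) r (w : {ffun 'I_r.+1 -> gT}) (j : nat) : gT :=
  if j == r.+2 then 1 else pref w j.

Definition incw (gT : finGroupType) r (w : {ffun 'I_r.+1 -> gT}) (a b : gT) : {ffun 'I_r.+3 -> gT} :=
  chain r.+3 (Cw w) a b.

Definition mid (gT : finGroupType) r (v : {ffun 'I_r.+3 -> gT}) : {ffun 'I_r.+1 -> gT} :=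
  [ffun j : 'I_r.+1 => at_ v (nat_of_ord j).+1].

Lemma at_mid (gT : finGroupType) r (v : {ffun 'I_r.+3 -> gT}) j : (j < r.+1)%N ->
  at_ (mid v) j = at_ v j.+1.
Proof. by move=> jm; rewrite -[j]/(nat_of_ord (Ordinal jm)) !atE ffunE. Qed.

Lemma incw_mid (gT : finGroupType) r (v : {ffun 'I_r.+3 -> gT}) :
  incw (mid v) (at_ v 0) (pref (mid v) r.+1 * at_ v r.+2) = v.
Proof.
apply: ffun_at_eq => j jm; rewrite at_chain // /Cw.
case: j jm => [|j] jm; first by rewrite /= mulg1 mulVg mulg1.
rewrite /=; case: (eqVneq j r.+1) => [->|jn]; simpl_ifs.
  by rewrite /= mul1g mulg1 mulKg.
rewrite /= mul1g mulg1 mulKg at_mid //; lia.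
Qed.

Lemma core_nrm (gT : finGroupType) (H : {group gT}) r (gs : 'I_r -> gT) (z : gT) :
  (\bigcap_(g : gT) (H :^ g) = (\bigcap_(i < r) (H :^ gs i)) :&: H) ->
  (forall j, (j < r.+1)%N -> exists2 p, p \in H & z = Qf gs j * p * (Qf gs j)^-1) ->
  nrm H z.
Proof.
move=> hcore hz x.
have zc : z \in \bigcap_(g : gT) (H :^ g).
  rewrite hcore inE; apply/andP; split.
    apply/bigcapP => i _; have [p pH ->] := hz (nat_of_ord i).+1 (ltn_ord i).
    by rewrite Qf_ord invgK -mulgA -conjgE memJ_conjg.
  by have [p pH ->] := hz 0%N (ltn0Sn _); rewrite Qf0 mul1g invg1 mulg1.
move/bigcapP: zc => /(_ x^-1 isT) zx.
by rewrite -(conjsgKV x H) memJ_conjg.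
Qed.

Local Open Scope ring_scope.

Lemma sep_card (gT : finGroupType) (H : {group gT}) (k : fieldType) :
  grpalg_separable k H -> (#|H|%:R : k) != 0.
Proof.
case=> e [e0 emu einv].
pose E1 x := \sum_(y : gT) e x y.
have E1H : forall x, x \in H -> E1 x = \sum_(y in H) e x y.
  move=> x xH; rewrite /E1 [RHS]big_mkcond; apply: eq_bigr => y _.
  by case: ifP => // yH; apply: e0; rewrite yH andbF.
have E1inv : forall x, x \in H -> E1 x = E1 1%g.
  move=> x xH; rewrite /E1 -(mulVg x) (reindex_inj (mulIg (x^-1)%g)) /=.
  apply: eq_bigr => y _; case yH: (y \in H); first by rewrite einv.
  rewrite e0; last by rewrite groupMr ?groupV // yH andbF.
  by rewrite e0 // yH andbF.
have sum1 : \sum_(x in H) E1 x = 1.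
  have tot : \sum_(z : gT) \sum_(x in H) \sum_(y in H | (x * y)%g == z) e x y = 1.
    rewrite (eq_bigr (fun z => (z == 1%g)%:R)); last by move=> z _; apply: emu.
    by rewrite (bigD1 1%g) //= eqxx big1 ?addr0 // => z /negbTE ->.
  rewrite -tot [RHS]exchange_big /=; apply: eq_bigr => x xH.
  rewrite E1H // [RHS](eq_bigr (fun z => \sum_(y in H) (x * y == z)%g%:R * e x y)); last first.
    move=> z _; rewrite big_mkcondr /=; apply: eq_bigr => y _.
    by case: eqP => _; rewrite ?mul1r ?mul0r.
  rewrite exchange_big /=; apply: eq_bigr => y _.
  rewrite -mulr_suml (bigD1 (x * y)%g) //= eqxx big1 ?addr0 ?mul1r //.
  by move=> z /negbTE; rewrite eq_sym => ->.
apply/eqP => h0; move: sum1.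
rewrite (eq_bigr (fun _ => E1 1%g)); last by move=> x xH; apply: E1inv.
rewrite sumr_const -mulr_natl h0 mul0r => /eqP; by rewrite eq_sym oner_eq0.
Qed.

Definition F2 (gT : finGroupType) (k : fieldType) r (gs : 'I_r -> gT)
  (w : {ffun 'I_r.+1 -> gT}) (v : tbasis gT r.+3) : tbasis gT r.+2 -> k :=
  fun t => (mid v == w)%:R * unitv k (phi gs (at_ v 0) (pref w r.+1 * at_ v r.+2)%g) t.

Definition cst (gT : finGroupType) (H : {group gT}) (k : fieldType) r : k :=
  ((#|H| ^ r.+3)%N%:R)^-1.

Definition Phi2 (gT : finGroupType) (H : {group gT}) (k : fieldType) r (gs : 'I_r -> gT)
  (w : {ffun 'I_r.+1 -> gT}) (u : tbasis gT r.+3) : tbasis gT r.+2 -> k :=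
  fun t => cst H k r * \sum_(h : {ffun 'I_r.+3 -> gT} | h \in ffun_on H)
              F2 k gs w (hact h u) t.

Definition psi_val (gT : finGroupType) (k : fieldType) r (w : {ffun 'I_r.+1 -> gT})
  (o : option (gT * gT)) : tbasis gT r.+3 -> k :=
  fun t => if o is Some ab then unitv k (incw w ab.1 ab.2) t else 0.

Definition Psi2 (gT : finGroupType) (H : {group gT}) (k : fieldType) r (gs : 'I_r -> gT)
  (w : {ffun 'I_r.+1 -> gT}) (s : tbasis gT r.+2) : tbasis gT r.+3 -> k :=
  psi_val k w [pick ab : gT * gT | relb H s (phi gs ab.1 ab.2)].

Lemma hmul_inj (gT : finGroupType) m (d : {ffun 'I_m -> gT}) : injective (hmul d).
Proof.
move=> a b e; apply/ffunP => j; move/ffunP: e => /(_ j); rewrite !ffunE.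
exact: mulgI.
Qed.

Lemma avg_inv (gT : finGroupType) (H : {group gT}) (k : fieldType) m
  (G : {ffun 'I_m -> gT} -> k) (u d : {ffun 'I_m -> gT}) :
  d \in ffun_on H ->
  \sum_(h : {ffun 'I_m -> gT} | h \in ffun_on H) G (hact h (hact d u)) =
  \sum_(h : {ffun 'I_m -> gT} | h \in ffun_on H) G (hact h u).
Proof.
move=> dH; rewrite [RHS](reindex_inj (@hmul_inj gT m d)) /=.
apply: eq_big => h; last by rewrite hact_comp.
apply/idP/idP => hH; first exact: hset_mul.
have -> : h = hmul (hinv d) (hmul d h).
  by apply/ffunP => j; rewrite !ffunE mulgA mulVg mul1g.
by apply: hset_mul => //; apply: hset_inv.
Qed.

Lemma bmap_avg (k : fieldType) (T I : finType) (sigma : T -> T) (P : pred I) (c : k)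
  (f : I -> T -> k) t' :
  bmap sigma (fun t => c * \sum_(i | P i) f i t) t' = c * \sum_(i | P i) bmap sigma (f i) t'.
Proof.
rewrite /bmap -mulr_sumr; congr (_ * _).
by rewrite exchange_big.
Qed.

Lemma vmap_avg (k : fieldType) (T1 T2 I : finType) (G : T1 -> T2 -> k) (P : pred I) (c : k)
  (d : I -> k) (x : I -> T1) t :
  vmap G (fun s => c * \sum_(i | P i) d i * unitv k (x i) s) t = c * \sum_(i | P i) d i * G (x i) t.
Proof.
rewrite /vmap.
rewrite (eq_bigr (fun s => c * \sum_(i | P i) d i * (unitv k (x i) s * G s t))); last first.
  by move=> s _; rewrite -mulrA mulr_suml; congr (_ * _); apply: eq_bigr => i _; rewrite mulrA.
rewrite -mulr_sumr exchange_big /=; congr (_ * _); apply: eq_bigr => i _.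
by rewrite -mulr_sumr sum_unitv.
Qed.

Lemma mid_ldact (gT : finGroupType) r g (v : {ffun 'I_r.+3 -> gT}) : mid (ldact g v) = mid v.
Proof. by apply/ffunP => j; rewrite !ffunE at_ldact //; rewrite !ltnS ltnW. Qed.
Lemma mid_rdact (gT : finGroupType) r g (v : {ffun 'I_r.+3 -> gT}) : mid (rdact g v) = mid v.
Proof.
apply/ffunP => j; rewrite !ffunE at_rdact //; last by rewrite !ltnS ltnW.
by have := ltn_ord j; case: eqP => // e; lia.
Qed.

Lemma Phi2_hom (gT : finGroupType) (H : {group gT}) (k : fieldType) r (gs : 'I_r -> gT) w :
  tens_hom H (Phi2 H k gs w).
Proof.
split.
- apply: hom_rel => u d dH; apply: span0 => t.
  by rewrite /Phi2 (@avg_inv gT H k r.+3 (fun v => F2 k gs w v t) u d dH) subrr.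
- move=> g u; apply: span0 => t; rewrite /Phi2 bmap_avg.
  rewrite (eq_bigr (fun h => bmap (ldact g) (F2 k gs w (hact h u)) t)) ?subrr //.
  move=> h _; rewrite hact_ldact /F2 bmap_scale_unitv mid_ldact.
  by rewrite !at_ldact //= /phi ldact_chain.
- move=> g u; apply: span0 => t; rewrite /Phi2 bmap_avg.
  rewrite (eq_bigr (fun h => bmap (rdact g) (F2 k gs w (hact h u)) t)) ?subrr //.
  move=> h _; rewrite hact_rdact /F2 bmap_scale_unitv mid_rdact.
  by rewrite !at_rdact //= eqxx /phi rdact_chain mulgA.
Qed.

Lemma phi_rel (gT : finGroupType) (H : {group gT}) r (gs : 'I_r -> gT) a b a' b' :
  (\bigcap_(g : gT) (H :^ g) = (\bigcap_(i < r) (H :^ gs i)) :&: H)%g ->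
  relb H (phi gs a b) (phi gs a' b') ->
  exists z, [/\ nrm H z, a' = (a * z)%g & b' = (z^-1 * b)%g].
Proof.
move=> hcore /relP [h hH e].
have [ea eb hm] := @chain_rel gT H r.+2 (Qf gs) a b a' b' h (Qf0 gs) (Qfl gs) isT e.
exists (at_ h 0); split => //; apply: (core_nrm hcore) => j jm.
by exists (at_ h j); [exact: at_in | rewrite hm].
Qed.

Lemma incw_conj (gT : finGroupType) (H : {group gT}) r (w : {ffun 'I_r.+1 -> gT}) a b z :
  nrm H z -> exists2 h, h \in ffun_on H & incw w (a * z)%g (z^-1 * b)%g = hact h (incw w a b).
Proof.
move=> nz; apply: chain_conj => //.
by rewrite /Cw /= eqxx.
Qed.

Lemma rel_ldact (gT : finGroupType) (H : {group gT}) m g (s s' : {ffun 'I_m -> gT}) :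
  relb H s s' -> relb H (ldact g s) (ldact g s').
Proof. by case/relP => h hH ->; apply/relP; exists h; rewrite ?hact_ldact. Qed.
Lemma rel_rdact (gT : finGroupType) (H : {group gT}) m g (s s' : {ffun 'I_m -> gT}) :
  relb H s s' -> relb H (rdact g s) (rdact g s').
Proof. by case/relP => h hH ->; apply/relP; exists h; rewrite ?hact_rdact. Qed.
Lemma ldactK (gT : finGroupType) m g (s : {ffun 'I_m -> gT}) : ldact g^-1 (ldact g s) = s.
Proof. by apply/ffunP => j; rewrite !ffunE; case: (nat_of_ord j == 0%N); rewrite ?mulKg. Qed.
Lemma rdactK (gT : finGroupType) m g (s : {ffun 'I_m -> gT}) : rdact g^-1 (rdact g s) = s.
Proof. by apply/ffunP => j; rewrite !ffunE; case: (nat_of_ord j == m.-1); rewrite ?mulgK. Qed.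

Lemma Psi2_hom (gT : finGroupType) (H : {group gT}) (k : fieldType) r (gs : 'I_r -> gT) w :
  (\bigcap_(g : gT) (H :^ g) = (\bigcap_(i < r) (H :^ gs i)) :&: H)%g ->
  tens_hom H (Psi2 H k gs w).
Proof.
move=> hcore; split.
- apply: hom_rel => s d dH; apply: span0 => t.
  rewrite /Psi2 (@eq_pick _ _ (fun ab : gT * gT => relb H s (phi gs ab.1 ab.2))) ?subrr //.
  move=> ab /=; have r0 : relb H s (hact d s) by apply/relP; exists d.
  apply/idP/idP => hr; first exact: rel_trans r0 hr.
  exact: rel_trans (rel_sym r0) hr.
- move=> g s; rewrite /Psi2.
  case: pickP => [[a b] /= Hab|N1]; case: pickP => [[a' b'] /= Hab'|N2] /=.
  + have r1 : relb H (ldact g s) (phi gs (g * a')%g b').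
      by rewrite /phi -ldact_chain; apply: rel_ldact.
    have [z [nz ea eb]] := phi_rel hcore (rel_trans (rel_sym Hab) r1).
    have [h2 h2H e2] := incw_conj w a b nz.
    apply: span_ext (spanN (tz_hact k (incw w a b) h2H)) => t.
    rewrite /psi_val /= bmap_unitv /incw ldact_chain -/(incw w _ _) ea eb.
    have -> : chain r.+3 (Cw w) (a * z)%g (z^-1 * b)%g = incw w (a * z)%g (z^-1 * b)%g by [].
    by rewrite e2 opprB.
  + exfalso; move: (N2 ((g^-1 * a)%g, b)) => /=.
    have := rel_ldact g^-1 Hab; rewrite ldactK /phi ldact_chain => ->; done.
  + exfalso; move: (N1 ((g * a')%g, b')) => /=.
    have := rel_ldact g Hab'; rewrite /phi ldact_chain => ->; done.
  + apply: span0 => t; rewrite /psi_val /bmap big1 ?subrr //.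
- move=> g s; rewrite /Psi2.
  case: pickP => [[a b] /= Hab|N1]; case: pickP => [[a' b'] /= Hab'|N2] /=.
  + have r1 : relb H (rdact g s) (phi gs a' (b' * g)%g).
      by rewrite /phi -rdact_chain; apply: rel_rdact.
    have [z [nz ea eb]] := phi_rel hcore (rel_trans (rel_sym Hab) r1).
    have [h2 h2H e2] := incw_conj w a b nz.
    apply: span_ext (spanN (tz_hact k (incw w a b) h2H)) => t.
    rewrite /psi_val /= bmap_unitv /incw rdact_chain -/(incw w _ _) ea eb.
    have -> : chain r.+3 (Cw w) (a * z)%g (z^-1 * b)%g = incw w (a * z)%g (z^-1 * b)%g by [].
    by rewrite e2 opprB.
  + exfalso; move: (N2 (a, (b * g^-1)%g)) => /=.
    have := rel_rdact g^-1 Hab; rewrite rdactK /phi rdact_chain => ->; done.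
  + exfalso; move: (N1 (a', (b' * g)%g)) => /=.
    have := rel_rdact g Hab'; rewrite /phi rdact_chain => ->; done.
  + apply: span0 => t; rewrite /psi_val /bmap big1 ?subrr //.
Qed.

Lemma key2 (gT : finGroupType) (H : {group gT}) (k : fieldType) r (gs : 'I_r -> gT)
  (u h : {ffun 'I_r.+3 -> gT}) :
  (\bigcap_(g : gT) (H :^ g) = (\bigcap_(i < r) (H :^ gs i)) :&: H)%g ->
  h \in ffun_on H ->
  tens_zero H (fun t => Psi2 H k gs (mid (hact h u))
     (phi gs (at_ (hact h u) 0) (pref (mid (hact h u)) r.+1 * at_ (hact h u) r.+2)%g) t
     - unitv k u t).
Proof.
move=> hcore hH; rewrite /Psi2.
case: pickP => [[a' b'] /= Hab | N]; last first.
  by have := N (at_ (hact h u) 0, (pref (mid (hact h u)) r.+1 * at_ (hact h u) r.+2)%g); rewrite /= rel_refl.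
have [z [nz ea eb]] := phi_rel hcore Hab.
have [h2 h2H e2] := incw_conj (mid (hact h u)) (at_ (hact h u) 0)
   (pref (mid (hact h u)) r.+1 * at_ (hact h u) r.+2)%g nz.
rewrite incw_mid hact_comp in e2.
apply: span_ext (tz_hact k u (hset_mul hH h2H)) => t.
by rewrite /psi_val /= ea eb e2.
Qed.

Lemma comp2 (gT : finGroupType) (H : {group gT}) (k : fieldType) r (gs : 'I_r -> gT)
  (u : {ffun 'I_r.+3 -> gT}) :
  grpalg_separable k H ->
  (\bigcap_(g : gT) (H :^ g) = (\bigcap_(i < r) (H :^ gs i)) :&: H)%g ->
  tens_zero H (fun t => \sum_(j < #|{ffun 'I_r.+1 -> gT}|)
     vmap (Psi2 H k gs (enum_val j)) (Phi2 H k gs (enum_val j) u) t - unitv k u t).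
Proof.
move=> hsep hcore.
have cne : ((#|H| ^ r.+3)%N%:R : k) != 0 by rewrite natrX expf_neq0 // sep_card.
apply: span_ext (spanZ (cst H k r)
   (span_sum (P := fun h => h \in ffun_on H) (fun h hH => @key2 gT H k r gs u h hcore hH))) => t.
rewrite sumrB mulrBr; congr (_ - _); last first.
  rewrite sumr_const card_ffun_on card_ord -mulr_natr mulrCA /cst mulVf //.
  by rewrite mulr1.
rewrite -(big_enum_val (fun w => vmap (Psi2 H k gs w) (Phi2 H k gs w u) t)) /=.
rewrite [RHS](eq_bigl (fun _ => true)); last by move=> w; rewrite ?inE.
have vm : forall w, vmap (Psi2 H k gs w) (Phi2 H k gs w u) t =
   cst H k r * \sum_(h : {ffun 'I_r.+3 -> gT} | h \in ffun_on H)
      (mid (hact h u) == w)%:R *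
      Psi2 H k gs w (phi gs (at_ (hact h u) 0) (pref w r.+1 * at_ (hact h u) r.+2)%g) t.
  by move=> w; rewrite /Phi2 /F2; apply: vmap_avg.
rewrite (eq_bigr _ (fun w _ => vm w)) -mulr_sumr exchange_big /=; congr (_ * _).
apply: eq_bigr => h _; rewrite (bigD1 (mid (hact h u))) //= eqxx mul1r big1 ?addr0 //.
by move=> w' /negbTE; rewrite eq_sym => ->; rewrite mul0r.
Qed.

Theorem mainTheorem8 (gT : finGroupType) (H : {group gT}) (k : fieldType)
  (r : nat) (gs : 'I_r -> gT) :
  grpalg_separable k H ->
  (0 < r)%N ->
  (\bigcap_(g : gT) (H :^ g) = (\bigcap_(i < r) (H :^ gs i)) :&: H)%g ->
  hdepth_le k H (2 * r + 3).
Proof.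
move=> hsep _ hcore; exists r.+2; split => //.
  by rewrite -mul2n; lia.
split; first exact: summand_up.
exists #|{ffun 'I_r.+1 -> gT}|, (fun j => Phi2 H k gs (enum_val j)),
  (fun j => Psi2 H k gs (enum_val j)).
split.
- by move=> j; apply: Phi2_hom.
- by move=> j; apply: Psi2_hom.
- by move=> s; apply: comp2.
Qed.
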